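(* Let $\varSigma$ be a surface diffeomorphic to $T^2$ or to the Klein bottle. If $\mathrm{D}$ is any flat connection on $\varSigma$ and $\xi$ is any $1$-form on $\varSigma$, then the connection $\nabla=\mathrm{D}-\xi\otimes\mathrm{Id}$ on $\varSigma$ (i.e.\ $\nabla_vw=\mathrm{D}_vw-\xi(v)w$) has skew-symmetric Ricci tensor. Conversely, every connection on $\varSigma$ with skew-symmetric Ricci tensor equals $\mathrm{D}-\xi\otimes\mathrm{Id}$ for some flat connection $\mathrm{D}$ on $\varSigma$ and some $1$-form $\xi$ on $\varSigma$.
   Context: Connections are in $T\varSigma$ and may have torsion. Curvature: $R(u,v)w=\nabla_v\nabla_u w-\nabla_u\nabla_v w+\nabla_{[u,v]}w$; Ricci tensor: $\rho(u,v)=\mathrm{tr}[w\mapsto R(u,w)v]$. *)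

(* Defs.v *)
(* Surfaces modelled by their universal cover R^2
   together with the (affine) deck transformation generators. *)
From Stdlib Require List.
From HB Require Import structures.
From mathcomp Require Import all_boot all_order all_algebra.
From mathcomp Require Import all_classical all_reals all_analysis.
Set Implicit Arguments. Unset Strict Implicit. Unset Printing Implicit Defensive.
Import Order.TTheory GRing.Theory Num.Theory.
Import numFieldNormedType.Exports.
Local Open Scope ring_scope.

Section Defs.
Variable R : realType.

Notation pt := 'rV[R]_2.

Definition ebase (i : 'I_2) : pt := delta_mx 0 i.

Definition pd (f : pt -> R^o) (i : 'I_2) : pt -> R^o :=
  fun p => 'D_(ebase i) f p.

Fixpoint Ck (n : nat) (f : pt -> R^o) : Prop :=
  match n with
  | 0 => continuous f
  | n.+1 => continuous f /\
      forall i, (forall p, derivable f p (ebase i)) /\ Ck n (pd f i)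
  end.
Definition smooth (f : pt -> R^o) : Prop := forall n, Ck n f.

Record deck := Deck { sgn : 'I_2 -> R; tr : pt }.
Definition act (g : deck) (p : pt) : pt := \row_j (sgn g j * p 0 j + tr g 0 j).

Definition sg2 (a b : R) : 'I_2 -> R := fun i => if i == 0 then a else b.
Definition v2 (a b : R) : pt := \row_j (if j == 0 then a else b).

(* T^2 = R^2 / <(x,y)->(x+1,y), (x,y)->(x,y+1)> *)
Definition torus_gens : seq deck :=
  [:: Deck (sg2 1 1) (v2 1 0); Deck (sg2 1 1) (v2 0 1)].
(* Klein bottle = R^2 / <(x,y)->(x+1,-y), (x,y)->(x,y+1)> *)
Definition klein_gens : seq deck :=
  [:: Deck (sg2 1 (-1)) (v2 1 0); Deck (sg2 1 1) (v2 0 1)].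

(* A (possibly torsion) connection on R^2, in coordinates:
   nabla_{d_i} d_j = sum_k G i j k d_k. *)
Definition chr := 'I_2 -> 'I_2 -> 'I_2 -> pt -> R^o.

(* G descends to the quotient surface: smooth and deck-invariant *)
Definition connection_on (gens : seq deck) (G : chr) : Prop :=
  (forall i j k, smooth (G i j k)) /\
  (forall g, List.In g gens -> forall i j k p,
     G i j k (act g p) = sgn g i * sgn g j * sgn g k * G i j k p).

(* 1-form xi = sum_i xi_i dx^i descending to the quotient *)
Definition one_form_on (gens : seq deck) (xi : 'I_2 -> pt -> R^o) : Prop :=
  (forall i, smooth (xi i)) /\
  (forall g, List.In g gens -> forall i p, xi i (act g p) = sgn g i * xi i p).

(* m-th component of R(d_i,d_j)d_l, with
   R(u,v)w = nabla_v nabla_u w - nabla_u nabla_v w + nabla_[u,v] w *)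
Definition curv (G : chr) (i j l m : 'I_2) (p : pt) : R :=
  pd (G i l m) j p - pd (G j l m) i p
  + \sum_(k < 2) (G i l k p * G j k m p - G j l k p * G i k m p).

(* rho(d_i,d_l) = tr [w |-> R(d_i,w) d_l] *)
Definition ricci (G : chr) (i l : 'I_2) (p : pt) : R :=
  \sum_(j < 2) curv G i j l j p.

Definition flat (G : chr) : Prop := forall i j l m p, curv G i j l m p = 0.

Definition ricci_skew (G : chr) : Prop :=
  forall i l p, ricci G i l p = - ricci G l i p.

Definition minus_xi_id (D : chr) (xi : 'I_2 -> pt -> R^o) : chr :=
  fun i j k p => D i j k p - xi i p * (if j == k then 1 else 0).

End Defs.

(* Main.v *)
Require Import Defs.
From HB Require Import structures.
From mathcomp Require Import all_boot all_order all_algebra.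
From mathcomp Require Import all_classical all_reals all_analysis.
From mathcomp Require Import ring lra.
Import Order.TTheory GRing.Theory Num.Theory.
Import numFieldNormedType.Exports.
Local Open Scope ring_scope.

Section Aux.
Variable R : realType.
Notation pt := 'rV[R]_2.

Lemma ord2P (i : 'I_2) : i = 0 \/ i = 1.
Proof. case: i => [[|[|n]] Hn]; [left|right|by []]; exact/val_inj. Qed.

Lemma big_ord2 (F : 'I_2 -> R) : \sum_(k < 2) F k = F 0 + F 1.
Proof.
rewrite big_ord_recl big_ord_recl big_ord0 addr0; congr (_ + F _); exact/val_inj.
Qed.

Lemma pd_lin (f g : pt -> R^o) (a b : R) (i : 'I_2) p :
  derivable f p (ebase R i) -> derivable g p (ebase R i) ->
  pd (fun q => a * f q + b * g q) i p = a * pd f i p + b * pd g i p.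
Proof.
move=> hf hg.
have -> : (fun q => a * f q + b * g q) = (a \*: f) + (b \*: g) by [].
rewrite /pd deriveD ?deriveZ //; exact: derivableZ.
Qed.

Lemma Ck_lin n : forall (f g : pt -> R^o) (a b : R),
  Ck n f -> Ck n g -> Ck n (fun q => a * f q + b * g q).
Proof.
elim: n => [|n IH] f g a b /=.
  move=> cf cg x.
  apply: (@continuousD R _ _ (fun q => a * f q) (fun q => b * g q)).
    apply: continuousM; [exact: cst_continuous| exact: cf].
  apply: continuousM; [exact: cst_continuous| exact: cg].
move=> [cf df] [cg dg]; split.
  move=> x.
  apply: (@continuousD R _ _ (fun q => a * f q) (fun q => b * g q)).
    apply: continuousM; [exact: cst_continuous| exact: cf].
  apply: continuousM; [exact: cst_continuous| exact: cg].
move=> i; have [df1 df2] := df i; have [dg1 dg2] := dg i; split.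
  move=> p.
  have -> : (fun q => a * f q + b * g q) = (a \*: f) + (b \*: g) by [].
  apply: derivableD; exact: derivableZ.
have -> : pd (fun q => a * f q + b * g q) i = fun q => a * pd f i q + b * pd g i q.
  by apply: funext => q; rewrite pd_lin.
exact: IH.
Qed.

Lemma smooth_der (f : pt -> R^o) (i : 'I_2) p : smooth f -> derivable f p (ebase R i).
Proof. by move=> sf; have [_ h] := sf 1%N; have [h1 _] := h i; exact: h1. Qed.

Lemma smooth_lin (f g : pt -> R^o) a b :
  smooth f -> smooth g -> smooth (fun q => a * f q + b * g q).
Proof. by move=> sf sg n; apply: Ck_lin. Qed.

Definition dl (j k : 'I_2) : R := if j == k then 1 else 0.

Lemma mx_eq (D : chr R) xi i j k :
  minus_xi_id D xi i j k = fun q => 1 * D i j k q + (- dl j k) * xi i q.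
Proof. apply: funext => q; rewrite /minus_xi_id /dl; by rewrite mul1r mulNr mulrC. Qed.

Lemma curv_mx (D : chr R) xi :
  (forall i j k, smooth (D i j k)) -> (forall i, smooth (xi i)) ->
  forall i j l m p,
  curv (minus_xi_id D xi) i j l m p =
  curv D i j l m p - dl l m * (pd (xi i) j p - pd (xi j) i p).
Proof.
move=> sD sx i j l m p.
rewrite /curv !mx_eq !pd_lin; try exact: smooth_der.
rewrite !big_ord2 /=.
case: (ord2P l) => ->; case: (ord2P m) => ->; rewrite /minus_xi_id /dl /=; ring.
Qed.

Lemma curv_diag (G : chr R) i l m p : curv G i i l m p = 0.
Proof. rewrite /curv big_ord2; ring. Qed.

Lemma curv_anti (G : chr R) l m p : curv G 1 0 l m p = - curv G 0 1 l m p.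
Proof. rewrite /curv !big_ord2; ring. Qed.

Lemma curv_trace (G : chr R) p :
  curv G 0 1 0 0 p + curv G 0 1 1 1 p =
  pd (G 0 0 0) 1 p + pd (G 0 1 1) 1 p - pd (G 1 0 0) 0 p - pd (G 1 1 1) 0 p.
Proof. rewrite /curv !big_ord2; ring. Qed.

Lemma ricci2 (G : chr R) i l p :
  ricci G i l p = curv G i 0 l 0 p + curv G i 1 l 1 p.
Proof. by rewrite /ricci big_ord2. Qed.

Lemma sgn_sq (gens : seq (deck R)) :
  gens = torus_gens R \/ gens = klein_gens R ->
  forall g, List.In g gens -> forall i, sgn g i * sgn g i = 1.
Proof.
move=> hg g; case: hg => -> /=; move=> [<-|[<-|[]]] i /=; rewrite /sg2;
  by case: (_ == _); rewrite ?mulr1 ?mulrNN ?mulr1.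
Qed.

End Aux.

Theorem theorem5p2 (R : realType) (gens : seq (deck R)) :
  gens = torus_gens R \/ gens = klein_gens R ->
  (forall (D : chr R) (xi : 'I_2 -> 'rV[R]_2 -> R^o),
     connection_on gens D -> flat D -> one_form_on gens xi ->
     ricci_skew (minus_xi_id D xi)) /\
  (forall G : chr R, connection_on gens G -> ricci_skew G ->
     exists (D : chr R) (xi : 'I_2 -> 'rV[R]_2 -> R^o),
       [/\ connection_on gens D, flat D, one_form_on gens xi &
           forall i j k p, G i j k p = minus_xi_id D xi i j k p]).
Proof.
move=> hg; split.
  move=> D xi [sD _] fD [sx _] i l p.
  rewrite !ricci2 !curv_mx // !fD.
  case: (ord2P i) => ->; case: (ord2P l) => ->; rewrite /dl /=; ring.
move=> G [sG dG] skG.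
pose c : R := - 2^-1.
pose xi : 'I_2 -> 'rV[R]_2 -> R^o := fun i q => c * G i 0 0 q + c * G i 1 1 q.
pose D : chr R := fun i j k q => 1 * G i j k q + dl R j k * xi i q.
have sx : forall i, smooth (xi i) by move=> i; apply: smooth_lin.
have sD : forall i j k, smooth (D i j k) by move=> i j k; apply: smooth_lin.
have eG : forall i j k p, G i j k p = minus_xi_id D xi i j k p.
  by move=> i j k p; rewrite /minus_xi_id /D /dl; case: (_ == _); ring.
have eG' : G = minus_xi_id D xi.
  by apply: funext => i; apply: funext => j; apply: funext => k; apply: funext => p.
exists D, xi; split => //.
- split => // g gin i j k p.
  rewrite /D /xi !dG // /dl.
  have sq := @sgn_sq R gens hg g gin.
  case: eqP => [->|_]; last by ring.
  have s0 := sq 0; have s1 := sq 1; have sk := sq k.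
  rewrite -!(mulrA (sgn g i)) s0 s1 sk ?mulr1; ring.
- move=> i j l m p.
  have := @curv_mx R D xi sD sx i j l m p; rewrite -eG' => h.
  have -> : curv D i j l m p = curv G i j l m p + dl R l m * (pd (xi i) j p - pd (xi j) i p) by rewrite h; ring.
  rewrite /xi !pd_lin; try exact: smooth_der.
  have r00 := skG 0 0 p; have r11 := skG 1 1 p; have r01 := skG 0 1 p.
  rewrite !(@ricci2 R) !(@curv_diag R) !(@curv_anti R) in r00 r11 r01.
  have tr := @curv_trace R G p.
  case: (ord2P i) => ->; case: (ord2P j) => ->; rewrite ?curv_diag ?curv_anti;
  case: (ord2P l) => ->; case: (ord2P m) => ->; rewrite /dl /c /=; lra.
- split => // g gin i p.
  rewrite /xi !dG //.
  have sq := @sgn_sq R gens hg g gin.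
  have s0 := sq 0; have s1 := sq 1.
  rewrite -!(mulrA (sgn g i)) s0 s1 ?mulr1; ring.
Qed.
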